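(* Let $r \geq 2$, let $H$ be a digraph (possibly with loops), and let $D$ be an $H$-colored $r$-quasi-transitive digraph such that every directed cycle of length $r+1$ in $D$ is an $H$-cycle. Let $u,v\in V(D)$. If $d_{D}(u,v) \geq r$ and $T$ is a shortest directed $uv$-path in $D$, then $T$ is an $H$-path.
   Context: All digraphs are finite. A digraph $D$ is $r$-quasi-transitive if for all distinct $u,v\in V(D)$, whenever there is a directed $uv$-path of length $r$, $u$ and $v$ are joined by an arc (in some direction). $d_D(u,v)$ is the length of a shortest directed $uv$-path (here it is assumed a $uv$-path exists). $D$ has no loops and comes with a map $\rho: A(D)\to V(H)$. For a walk $W=(x_0,\ldots,x_n)$ in $D$, there is an obstruction on $x_i$ if $(\rho(x_{i-1},x_i),\rho(x_i,x_{i+1})) \notin A(H)$; for an open walk this is considered at internal vertices $x_i$, $1\le i\le n-1$, for a closed walk at all $i\in\{0,\ldots,n-1\}$ with indices modulo $n$. An $H$-path is a directed path with no obstructions (the colours of consecutive arcs form a directed walk in $H$); an $H$-cycle is a directed cycle with no obstructions, taken cyclically. *)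

(* Defs.v *)
From mathcomp Require Import all_boot.
Set Implicit Arguments. Unset Strict Implicit. Unset Printing Implicit Defensive.

(* A digraph D is a finite vertex type V with an arc relation e : rel V
   (no loops: e irreflexive).  H is a finite type C with arc relation hA
   (loops allowed).  An H-colouring is rho : V -> V -> C; only its values on
   arcs (x,y) with e x y matter. *)

(* A directed uv-path, given by the list [:: u, x1, ..., xn] as u :: p,
   where p is the tail; its length is size p. Vertices are pairwise distinct. *)
Definition dpath (V : eqType) (e : rel V) (u v : V) (p : seq V) : bool :=
  [&& path e u p, last u p == v & uniq (u :: p)].

Definition r_quasi_transitive (V : eqType) (e : rel V) (r : nat) : Prop :=
  forall u v : V, u != v ->
    (exists p, dpath e u v p /\ size p = r) -> e u v || e v u.

Definition is_dist (V : eqType) (e : rel V) (u v : V) (d : nat) : Prop :=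
  (exists p, dpath e u v p /\ size p = d) /\
  (forall p, dpath e u v p -> d <= size p).

Definition shortest_dpath (V : eqType) (e : rel V) (u v : V) (p : seq V) : Prop :=
  dpath e u v p /\ (forall q, dpath e u v q -> size p <= size q).

Definition no_obstruction_open (V : eqType) (C : Type) (hA : rel C)
  (rho : V -> V -> C) (s : seq V) : Prop :=
  forall (x0 : V) (i : nat), i.+2 < size s ->
    hA (rho (nth x0 s i) (nth x0 s i.+1)) (rho (nth x0 s i.+1) (nth x0 s i.+2)).

Definition H_path (V : eqType) (C : Type) (e : rel V) (hA : rel C)
  (rho : V -> V -> C) (u v : V) (p : seq V) : Prop :=
  dpath e u v p /\ no_obstruction_open hA rho (u :: p).

(* Directed cycle given by the list c = [:: x0; ...; x_{n-1}] of distinct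
   vertices with arcs x_i -> x_{i+1 mod n}; its length is size c.
   (Length >= 2 automatically when e is irreflexive.) *)
Definition dcycle (V : eqType) (e : rel V) (c : seq V) : bool :=
  (0 < size c) && cycle e c && uniq c.

Definition no_obstruction_closed (V : eqType) (C : Type) (hA : rel C)
  (rho : V -> V -> C) (c : seq V) : Prop :=
  forall (x0 : V) (i : nat), i < size c ->
    let n := size c in
    hA (rho (nth x0 c i) (nth x0 c (i.+1 %% n)))
       (rho (nth x0 c (i.+1 %% n)) (nth x0 c (i.+2 %% n))).

Definition H_cycle (V : eqType) (C : Type) (e : rel V) (hA : rel C)
  (rho : V -> V -> C) (c : seq V) : Prop :=
  dcycle e c /\ no_obstruction_closed hA rho c.

(* Main.v *)
Require Import Defs.
From mathcomp Require Import all_boot.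
From mathcomp Require Import zify.

Theorem theorem21 (r : nat) (V C : finType) (e : rel V) (hA : rel C)
  (rho : V -> V -> C) :
  2 <= r ->
  irreflexive e ->
  r_quasi_transitive e r ->
  (forall c : seq V, dcycle e c -> size c = r.+1 -> H_cycle e hA rho c) ->
  forall (u v : V) (d : nat), is_dist e u v d -> r <= d ->
  forall T : seq V, shortest_dpath e u v T -> H_path e hA rho u v T.
Proof.
move=> r2 irr rqt Hcyc u v d [[p0 [Hp0 Hs0]] Hmin] rd T [HT Tmin].
have nT : r <= size T by apply: leq_trans rd (Hmin T HT).
split => // x0 i Hi.
set n := size T in nT Hi Tmin *.
rewrite /= in Hi.
pose j := minn i (n - r).
have hj1 : j <= i by rewrite /j; lia.
have hj2 : i.+2 <= j + r by rewrite /j; lia.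
have hj3 : j + r <= n by rewrite /j; lia.
pose A := take j T; pose B' := take r.-1 (drop j T).
pose y := nth x0 T (j + r.-1); pose Cc := drop (j+r) T.
have eT : T = A ++ B' ++ y :: Cc.
  rewrite /A /B' /y /Cc.
  rewrite -{1}(cat_take_drop j T); congr (_ ++ _).
  rewrite -{1}(cat_take_drop r.-1 (drop j T)); congr (_ ++ _).
  rewrite drop_drop (drop_nth x0); last by rewrite -/n; lia.
  have -> : r.-1 + j = j + r.-1 by lia.
  by have -> : (j + r.-1).+1 = j + r by lia.
have sA : size A = j by rewrite /A size_takel //; lia.
have sB : size B' = r.-1 by rewrite /B' size_takel // size_drop; lia.
set x := last u A.
move: (HT) => /and3P [Hpath Hlast Huniq].
rewrite eT cat_path cat_path /= in Hpath.
move: Hpath => /and3P [pA pB' /andP [exlB pC]].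
rewrite eT !last_cat /= in Hlast.
have nxy : ~~ e x y.
  apply/negP => exy.
  have := Tmin (A ++ y :: Cc).
  have -> : dpath e u v (A ++ y :: Cc).
    rewrite /dpath cat_path /= pA exy pC last_cat /= Hlast /=.
    change (uniq (u :: (A ++ y :: Cc))); apply: (subseq_uniq _ Huniq).
    rewrite eT -!cat_cons.
    apply: (cat_subseq (subseq_refl (u :: A))).
    exact: suffix_subseq.
  move=> /(_ isT).
  have sT : n = j + (r.-1 + (size Cc).+1) by rewrite /n {1}eT !size_cat /= sA sB.
  rewrite size_cat /= sA sT => H; clear -H r2; lia.
pose c := x :: rcons B' y.
have es : u :: T = belast u A ++ (c ++ Cc).
  by rewrite eT -cat_cons (lastI u A) cat_rcons /c /= cat_rcons.
have uc : uniq c.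
  move: Huniq; rewrite -/(uniq (u :: T)) es cat_uniq => /and3P [_ _].
  by rewrite cat_uniq => /andP [].
have sc : size c = r.+1 by rewrite /c /= size_rcons sB prednK // ltnW.
have eyx : e y x.
  have xy : x != y.
    move: uc; rewrite /c /= => /andP [H _].
    apply/eqP => exy; move: H; rewrite exy mem_rcons mem_head //.
  have := rqt x y xy.
  have H : exists p, dpath e x y p /\ size p = r.
    exists (rcons B' y); split; last by rewrite size_rcons sB prednK // ltnW.
    by rewrite /dpath rcons_path pB' exlB last_rcons eqxx uc.
  move=> /(_ H); by rewrite (negbTE nxy).
have dc : dcycle e c.
  by rewrite /dcycle uc andbT /c /= !rcons_path last_rcons pB' exlB eyx.
have [_ Hno] := Hcyc c dc sc.
have nc : forall k, k < r.+1 -> nth x0 (u :: T) (j + k) = nth x0 c k.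
  move=> k hk; rewrite es nth_cat size_belast sA ltnNge leq_addr /= addKn.
  by rewrite -cat_cons nth_cat -/c sc hk.
have hlt : i - j < size c by rewrite sc; clear -hj1 hj2; lia.
have H := Hno x0 (i - j) hlt; simpl in H; rewrite size_rcons sB prednK in H; last exact: ltnW.
move: H; rewrite !modn_small; try (clear -hj1 hj2; lia).
rewrite -!nc; try (clear -hj1 hj2; lia).
rewrite !addnS subnKC //.
Qed.
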